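(* Let $G$ be a commutative group, $g\in\mathrm{Aut}(G)$ with $g\ne\mathrm{id}$, and $t\in G$. Let $f$ be the bijection of $G$ given by $f(x)=g(x)t$. Then $Z(G(f))=Z(G(g))$ as sets, and $Z(G(g))=\{x\in G:\ g(x)=x\}$.
   Context: The center $Z(Q)$ of a loop $Q$ is the set of elements that commute with all elements and lie in the left, middle and right nuclei (i.e., associate in every position). Construction $G(f)$: for a commutative group $G$ (written multiplicatively) and a bijection $f:G\to G$, let $\overline{G}=\{\overline{x}:x\in G\}$ be a disjoint copy of $G$, and let $G(f)$ be $G\cup\overline{G}$ with multiplication $x*y=xy$, $x*\overline{y}=\overline{xy}$, $\overline{x}*y=\overline{xy}$, $\overline{x}*\overline{y}=f(xy)$ for $x,y\in G$. *)

(* Defs.v *)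
(* The commutative group G is an abelian group written
   additively: a zmodType V (identity 0, product +). *)
From HB Require Import structures.
From mathcomp Require Import all_boot all_order all_algebra.
Set Implicit Arguments. Unset Strict Implicit. Unset Printing Implicit Defensive.
Import GRing.Theory.
Local Open Scope ring_scope.

(* The construction G(f): carrier V + V, where inl x = x and inr x = \overline{x}.
   x*y = xy, x*ybar = (xy)bar, xbar*y = (xy)bar, xbar*ybar = f(xy). *)
Definition Gf_mul (V : zmodType) (f : V -> V) (a b : V + V) : V + V :=
  match a, b with
  | inl x, inl y => inl (x + y)
  | inl x, inr y => inr (x + y)
  | inr x, inl y => inr (x + y)
  | inr x, inr y => inl (f (x + y))
  end.

Definition in_center (Q : Type) (mul : Q -> Q -> Q) (z : Q) : Prop :=
  (forall x, mul z x = mul x z) /\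
  (forall x y, mul (mul z x) y = mul z (mul x y)) /\
  (forall x y, mul (mul x z) y = mul x (mul z y)) /\
  (forall x y, mul (mul x y) z = mul x (mul y z)).

(* Main.v *)
Require Import Defs.
From HB Require Import structures.
From mathcomp Require Import all_boot all_order all_algebra.
From Stdlib Require Import FunctionalExtensionality.
Import GRing.Theory.
Local Open Scope ring_scope.

Lemma L1 (V : zmodType) (f : V -> V) a : (forall w, f (a + w) = a + f w) ->
  in_center (Gf_mul f) (inl a).
Proof.
move=> H.
have H' : forall w, f (w + a) = f w + a by move=> w; rewrite addrC H addrC.
split; [|split; [|split]].
- by case=> x /=; rewrite addrC.
- by case=> x; case=> y /=; rewrite ?addrA // -H addrA.
- by case=> x; case=> y /=; rewrite ?addrA.
- by case=> x; case=> y /=; rewrite ?addrA // H'.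
Qed.

Lemma L2 (V : zmodType) (f : V -> V) a : in_center (Gf_mul f) (inl a) -> f a = a + f 0.
Proof.
case=> _ [H _]; have := H (inr 0) (inr 0); rewrite /= !addr0 => -[] //.
Qed.

Lemma L3 (V : zmodType) (f : V -> V) a : in_center (Gf_mul f) (inr a) ->
  forall v, f a + v = a + f v.
Proof.
case=> _ [H _] v; have := H (inr 0) (inr v); rewrite /= !addr0 add0r => -[] //.
Qed.

Lemma center_char (V : zmodType) (g : V -> V)
  (g_add : {morph g : x y / x + y}) (g_nid : g <> id) (c : V) z :
  in_center (Gf_mul (fun x => g x + c)) z <-> exists2 x : V, z = inl x & g x = x.
Proof.
have g0 : g 0 = 0.
  have h := g_add 0 0; rewrite addr0 in h.
  by apply: (addrI (g 0)); rewrite addr0 -h.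
split.
- case: z => a Hc.
  + exists a => //; have := L2 _ _ _ Hc; rewrite g0 add0r; exact: addIr.
  + exfalso; apply: g_nid; apply: functional_extensionality => v.
    have E := L3 _ _ _ Hc.
    have E0 := E 0; rewrite g0 add0r addr0 /= in E0.
    have E1 := E v; rewrite /= in E1.
    have ga : g a = a by apply: (addIr c).
    rewrite ga -addrA in E1; have E2 := addrI _ E1.
    by apply: (addIr c); rewrite -E2 addrC.
- case=> a -> ga; apply: L1 => w; by rewrite g_add ga addrA.
Qed.

Theorem lemma3p1 (V : zmodType) (g : V -> V)
  (g_add : {morph g : x y / x + y}) (g_bij : bijective g)
  (g_nid : g <> id) (t : V) :
  (forall z : V + V,
     in_center (Gf_mul (fun x => g x + t)) z <-> in_center (Gf_mul g) z) /\
  (forall z : V + V,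
     in_center (Gf_mul g) z <-> exists2 x : V, z = inl x & g x = x).
Proof.
have E : forall z, in_center (Gf_mul g) z <-> in_center (Gf_mul (fun x => g x + 0)) z.
  by move=> z; have -> : (fun x => g x + 0) = g by apply: functional_extensionality => x; rewrite addr0.
split=> z.
- have h1 := center_char _ _ g_add g_nid t z; have h2 := center_char _ _ g_add g_nid 0 z;
  have h3 := E z; tauto.
- have h2 := center_char _ _ g_add g_nid 0 z; have h3 := E z; tauto.
Qed.
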